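(* Let $\nu$ be a probability distribution on $\mathbb{R}^k$, $\mathcal{G}$ a class of measurable maps $\mathbb{R}^k\to\mathbb{R}^d$, $\mathcal{F}$ a symmetric class of real functions and $\Omega\subseteq\mathbb{R}^d$. Assume $\mu$ and $g_\#\nu$ are supported on $\Omega$ for all $g\in\mathcal{G}$. Let $\widetilde\mu_n$ be any probability distribution supported on $\Omega$, let $Z_1,\dots,Z_m$ be points of $\mathbb{R}^k$ with $\widehat\nu_m=\frac1m\sum_j\delta_{Z_j}$, let $\epsilon_{opt}\ge 0$, and let $\widetilde g_n^*\in\mathcal{G}$ with $d_{\mathcal{F}}(\widetilde\mu_n,(\widetilde g_n^* )_\#\nu)\le\inf_{\phi\in\mathcal{G}}d_{\mathcal{F}}(\widetilde\mu_n,\phi_\#\nu)+\epsilon_{opt}$ and $\widetilde g_{n,m}^*\in\mathcal{G}$ with $d_{\mathcal{F}}(\widetilde\mu_n,(\widetilde g_{n,m}^* )_\#\widehat\nu_m)\le\inf_{\phi\in\mathcal{G}}d_{\mathcal{F}}(\widetilde\mu_n,\phi_\#\widehat\nu_m)+\epsilon_{opt}$. Then for any function class $\mathcal{H}$ defined on $\Omega$, $$d_{\mathcal{H}}(\mu,(\widetilde g_n^* )_\#\nu)\le\epsilon_{opt}+2\mathcal{E}(\mathcal{H},\mathcal{F},\Omega)+\inf_{g\in\mathcal{G}}d_{\mathcal{F}}(\widetilde\mu_n,g_\#\nu)+d_{\mathcal{F}}(\mu,\widetilde\mu_n)\land d_{\mathcal{H}}(\mu,\widetilde\mu_n),$$ $$d_{\mathcal{H}}(\mu,(\widetilde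 g_{n,m}^* )_\#\nu)\le\epsilon_{opt}+2\mathcal{E}(\mathcal{H},\mathcal{F},\Omega)+\inf_{g\in\mathcal{G}}d_{\mathcal{F}}(\widetilde\mu_n,g_\#\nu)+d_{\mathcal{F}}(\mu,\widetilde\mu_n)\land d_{\mathcal{H}}(\mu,\widetilde\mu_n)+2d_{\mathcal{F}\circ\mathcal{G}}(\nu,\widehat\nu_m).$$
   Context: $\mathcal{F}$ symmetric means $f\in\mathcal{F}\Rightarrow -f\in\mathcal{F}$. $d_{\mathcal{F}}(\mu,\gamma)=\sup_{f\in\mathcal{F}}\mathbb{E}_\mu[f]-\mathbb{E}_\gamma[f]$; $g_\#\nu(A)=\nu(g^{-1}(A))$; $\mathcal{F}\circ\mathcal{G}=\{f\circ g:f\in\mathcal{F},g\in\mathcal{G}\}$; $\mathcal{E}(\mathcal{H},\mathcal{F},\Omega)=\sup_{h\in\mathcal{H}}\inf_{f\in\mathcal{F}}\|h-f\|_{L^\infty(\Omega)}$; $a\land b=\min(a,b)$. *)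

(* Defs.v *)
From HB Require Import structures.
From mathcomp Require Import all_boot all_order all_algebra.
From mathcomp Require Import all_classical all_reals all_analysis.
Set Implicit Arguments. Unset Strict Implicit. Unset Printing Implicit Defensive.
Import Order.TTheory GRing.Theory Num.Theory.
Import numFieldNormedType.Exports.
Local Open Scope classical_set_scope.
Local Open Scope ring_scope.

(* R^n (as row vectors) equipped with its Borel sigma-algebra, i.e. the
   sigma-algebra generated by the open sets of the product topology. *)
Definition Rvec (R : realType) (n : nat) := g_sigma_algebraType (@open 'rV[R]_n).

Section defs.
Local Open Scope ereal_scope.
Context {R : realType}.

Definition expect d (T : measurableType d) (mu : set T -> \bar R) (f : T -> R)
  : \bar R := \int[mu]_x (f x)%:E.

Definition ipm d (T : measurableType d) (F : set (T -> R))
  (mu gam : set T -> \bar R) : \bar R :=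
  ereal_sup [set expect mu f - expect gam f | f in F].

Definition symmetric_class (T : Type) (F : set (T -> R)) :=
  forall f, F f -> F (fun x => (- f x)%R).

Definition comp_class (X Y : Type) (F : set (Y -> R)) (G : set (X -> Y))
  : set (X -> R) := [set h | exists f g, [/\ F f, G g & h = f \o g]].

Definition empirical d (T : measurableType d) (m : nat) (Z : 'I_m -> T)
  : set T -> \bar R :=
  fun A => ((m%:R)^-1)%R%:E * \sum_(j < m) \d_(Z j) A.

Definition sup_dist (T : Type) (Om : set T) (h f : T -> R) : \bar R :=
  ereal_sup [set (`|h x - f x|%R)%:E | x in Om].

Definition approx_err (T : Type) (H F : set (T -> R)) (Om : set T) : \bar R :=
  ereal_sup [set ereal_inf [set sup_dist Om h f | f in F] | h in H].

Definition supported_on d (T : measurableType d) (mu : set T -> \bar R)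
  (Om : set T) := mu.-negligible (~` Om).

End defs.

(* Main.v *)
From HB Require Import structures.
From mathcomp Require Import all_boot all_order all_algebra.
From mathcomp Require Import all_classical all_reals all_analysis.
From mathcomp Require Import measurable_realfun.
From mathcomp Require Import lra ring.
Require Import Defs.
Import Order.TTheory GRing.Theory Num.Theory.
Import numFieldNormedType.Exports.
Local Open Scope classical_set_scope.
Local Open Scope ring_scope.
Local Open Scope ereal_scope.
Section helpers.
Context {R : realType}.

Lemma expect_fin {d} {T : measurableType d} {P : {measure set T -> \bar R}} {f : T -> R} :
  P.-integrable setT (EFin \o f) -> expect P f = (fine (expect P f))%:E.
Proof. by move=> intf; rewrite fineK //; exact: integrable_fin_num. Qed.

Lemma expectN d (T : measurableType d) (P : {measure set T -> \bar R}) (f : T -> R) :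
  P.-integrable setT (EFin \o f) -> expect P (fun x => - f x)%R = - expect P f.
Proof.
move=> intf; rewrite /expect.
under eq_integral do rewrite EFinN.
apply: integralN.
by rewrite fin_num_adde_defl// fin_numN integrable_neg_fin_num.
Qed.

Lemma mule2 (x : \bar R) : 2%:E * x = x + x.
Proof.
case: x => [r| |].
- by rewrite -EFinM -EFinD mulr2n mulrDl mul1r.
- by rewrite gt0_muley ?lte_fin.
- by rewrite gt0_muleNy ?lte_fin.

Qed.

Lemma supp_bound {d} {T : measurableType d} {P : probability T R} {Om : set T}
  {h f : T -> R} : supported_on P Om ->
  P.-integrable setT (EFin \o h) -> P.-integrable setT (EFin \o f) ->
  (`|fine (expect P h) - fine (expect P f)|)%:E <= sup_dist Om h f.
Proof.
move=> [N [mN PN ON]] ih iff.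
have Omn : Om !=set0.
  apply/set0P/negP => /eqP O0.
  have : P setT <= P N.
    by apply: le_measure; rewrite ?inE //; move=> x _; apply: ON; rewrite O0.
  by rewrite PN probability_setT lee_fin ler10.
case: Omn => x0 Ox0.
rewrite /sup_dist.
set s := ereal_sup _.
have s0 : (`|h x0 - f x0|)%:E <= s by apply: ereal_sup_ubound; exists x0.
case sE : s s0 => [r| |] s0; last 2 first.
- exact: leey.
- by [].
have hb : forall x, Om x -> (`|h x - f x| <= r)%R.
  by move=> x Ox; rewrite -lee_fin -sE; apply: ereal_sup_ubound; exists x.
have mh : measurable_fun setT h by apply/measurable_EFinP; exact: (measurable_int _ ih).
have mf : measurable_fun setT f by apply/measurable_EFinP; exact: (measurable_int _ iff).
have r0 : (0 <= r)%R by rewrite -lee_fin; apply: le_trans s0; rewrite lee_fin.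
have key : `|expect P h - expect P f| <= r%:E.
  rewrite /expect -integralB_EFin //.
  apply: le_trans (le_abse_integral _ _ _) _ => //.
    by exact: emeasurable_funB (measurable_int _ ih) (measurable_int _ iff).
  apply: le_trans (@ae_ge0_le_integral _ _ _ P setT _ _ (cst r%:E) _ _ _ _ _) _ => //.
  - change (measurable_fun setT (EFin \o (fun x => `|h x - f x|)%R)).
    apply/measurable_EFinP; apply: measurableT_comp => //; exact: measurable_funB.
  - exists N; split => // x /= Hx; apply: ON => Ox; apply: Hx => _.
    by rewrite lee_fin; apply: hb.
  by rewrite integral_cst // [X in r%:E * X](_ : _ = 1) ?mule1 //; exact: probability_setT.
move: key; rewrite {1}(expect_fin ih) {1}(expect_fin iff) -EFinB /=.
by [].
Qed.

Lemma expect_emp {d} {T : measurableType d} n (W : 'I_n.+1 -> T) (f : T -> R) :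
  measurable_fun setT f ->
  expect (empirical W) f = ((n.+1%:R)^-1 * \sum_(j < n.+1) f (W j))%R%:E.
Proof.
move=> mf.
have c0 : (0 <= ((n.+1)%:R)^-1 :> R)%R by rewrite invr_ge0.
pose c : {nonneg R} := NngNum c0.
have E : empirical W = mscale c (msum (fun k => \d_(W (inord k))) n.+1).
  apply/funext => A; rewrite /empirical /mscale /msum /=; congr (_ * _).
  by apply: eq_bigr => j _; rewrite inord_val.
have mfE : measurable_fun setT (EFin \o f) by apply/measurable_EFinP.
rewrite /expect E integralE.
rewrite (funerpos f) (funerneg f).
have mp : measurable_fun setT (EFin \o f^\+%R).
  by rewrite -funerpos; exact: measurable_funepos.
have mn : measurable_fun setT (EFin \o f^\-%R).
  by rewrite -funerneg; exact: measurable_funeneg.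
rewrite !ge0_integral_mscale //; last 2 first.
- by move=> x _; rewrite /= lee_fin funrneg_ge0.
- by move=> x _; rewrite /= lee_fin funrpos_ge0.
rewrite !ge0_integral_measure_sum //; last 2 first.
- by move=> x _; rewrite /= lee_fin funrneg_ge0.
- by move=> x _; rewrite /= lee_fin funrpos_ge0.
under eq_bigr do rewrite integral_dirac // diracT mul1e.
under [X in _ - _ * X]eq_bigr do rewrite integral_dirac // diracT mul1e.
rewrite /= !sumEFin -!EFinM -EFinB; congr EFin.
rewrite -mulrBr -sumrB; congr (_ * _)%R; apply: eq_bigr => j _.
rewrite inord_val.
have := funrposBneg f; move/(congr1 (fun g => g (W j))).
by [].
Qed.

Lemma pf_emp {d1 d2} {T1 : measurableType d1} {T2 : measurableType d2} n
  (W : 'I_n -> T1) (g : T1 -> T2) :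
  pushforward (empirical W) g = empirical (g \o W) :> (set T2 -> \bar R).
Proof.
apply/funext => A; rewrite /pushforward /empirical; congr (_ * _).
Qed.

Lemma pf_prob {d1 d2} {T1 : measurableType d1} {T2 : measurableType d2}
  (nu : probability T1 R) (g : T1 -> T2) : measurable_fun setT g ->
  exists P : probability T2 R, pushforward nu g = P :> (set T2 -> \bar R).
Proof.
move=> mg.
exists (distribution nu (HB.pack g (isMeasurableFun.Build _ _ _ _ _ mg))).
by [].
Qed.

Lemma expect_pf {d1 d2} {T1 : measurableType d1} {T2 : measurableType d2}
  (nu : {measure set T1 -> \bar R}) (g : T1 -> T2) (f : T2 -> R) :
  measurable_fun setT g ->
  (pushforward nu g).-integrable setT (EFin \o f) ->
  nu.-integrable setT (EFin \o (f \o g)) /\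
  expect (pushforward nu g) f = expect nu (f \o g).
Proof.
move=> mg intf.
have mfE := measurable_int _ intf.
have mf : measurable_fun setT f by apply/measurable_EFinP.
have int2 : nu.-integrable setT (EFin \o (f \o g)).
  apply/integrableP; split.
    by apply/measurable_EFinP; exact: measurableT_comp.
  move/integrableP : intf => [_]; apply: le_lt_trans.
  rewrite ge0_integral_pushforward //.
  by apply: (measurableT_comp (@abse_measurable R setT)) => //; exact: mfE.
split => //.
rewrite /expect (integral_pushforward mg) //.
Qed.

Lemma key (c : R) (s : set (\bar R)) (x E : \bar R) : s !=set0 ->
  (forall y, s y -> c%:E <= y + y + x) -> ereal_inf s <= E -> 0 <= E ->
  c%:E <= E + E + x.
Proof.
move=> [y0 sy0] hs hinf E0.
case: x hs => [r| |] hs.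
- have lb : ((c - r) / 2)%:E <= ereal_inf s.
    apply/ereal_infP => y sy; have := hs y sy.
    case: y {sy} => [t| |].
    + rewrite -!EFinD !lee_fin => ht; lra.
    + by move=> _; rewrite leey.
    + by rewrite /= leeNy_eq.
  case: E hinf E0 => [e| |] hinf E0.
  + have := le_trans lb hinf; rewrite -!EFinD !lee_fin => ?; lra.
  + by rewrite /= leey.
  + by [].
- case: E hinf E0 => [e| |] hinf E0 //=; by rewrite leey.
- have := hs y0 sy0; rewrite addeNy leeNy_eq => /eqP; by [].
Qed.

Lemma diff_fin {d} {T : measurableType d} {P Q : {measure set T -> \bar R}}
  {f f' : T -> R} : P.-integrable setT (EFin \o f) -> Q.-integrable setT (EFin \o f') ->
  expect P f - expect Q f' = (fine (expect P f) - fine (expect Q f'))%R%:E.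
Proof.
by move=> i1 i2; rewrite EFinB !fineK //; exact: integrable_fin_num.
Qed.

Lemma ipm_ge0 {d} {T : measurableType d} (P Q : {measure set T -> \bar R})
  (F : set (T -> R)) : F !=set0 -> symmetric_class F ->
  (forall f, F f -> P.-integrable setT (EFin \o f) /\ Q.-integrable setT (EFin \o f)) ->
  0 <= ipm F P Q.
Proof.
move=> [f Ff] sF hint; have [iP iQ] := hint f Ff.
have e1 : (fine (expect P f) - fine (expect Q f))%R%:E <= ipm F P Q.
  by apply: ereal_sup_ubound; exists f => //; rewrite diff_fin.
have e2 : (- (fine (expect P f) - fine (expect Q f)))%R%:E <= ipm F P Q.
  apply: ereal_sup_ubound; exists (fun x => - f x)%R; first exact: sF.
  rewrite !expectN // {1}(expect_fin iP) {1}(expect_fin iQ) -!EFinN -EFinB; congr EFin; ring.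
have [a0|a0] := leP 0%R (fine (expect P f) - fine (expect Q f))%R.
  by apply: le_trans e1; rewrite lee_fin.
by apply: le_trans e2; rewrite lee_fin oppr_ge0 ltW.
Qed.

Lemma supp_ne {d} {T : measurableType d} {P : probability T R} {Om : set T} :
  supported_on P Om -> Om !=set0.
Proof.
move=> [N [mN PN ON]].
apply/set0P/negP => /eqP O0.
have : P setT <= P N.
  by apply: le_measure; rewrite ?inE //; move=> x _; apply: ON; rewrite O0.
by rewrite PN probability_setT lee_fin ler10.
Qed.

Lemma core {d} {T : measurableType d} (mu mut gam : probability T R)
  (F H : set (T -> R)) (Om : set T) :
  F !=set0 -> supported_on mu Om -> supported_on mut Om -> supported_on gam Om ->
  (forall f, F f \/ H f -> [/\ mu.-integrable setT (EFin \o f),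
     mut.-integrable setT (EFin \o f) & gam.-integrable setT (EFin \o f)]) ->
  ipm H mu gam <= approx_err H F Om + approx_err H F Om +
    (mine (ipm F mu mut) (ipm H mu mut) + ipm F mut gam).
Proof.
move=> Fn smu smut sgam hint.
have [x0 Ox0] := supp_ne smu.
apply/ereal_supP => _ [h Hh <-].
have [ih1 ih2 ih3] := hint h (or_intror Hh).
rewrite (diff_fin ih1 ih3).
have infE : ereal_inf [set sup_dist Om h f | f in F] <= approx_err H F Om.
  by apply: ereal_sup_ubound; exists h.
apply: (key _ [set sup_dist Om h f | f in F]) => //; last first.
- apply: le_trans infE; apply/ereal_infP => _ [f Ff <-].
  have hx : ((`|h x0 - f x0|)%R)%:E <= sup_dist Om h f.
    by apply: ereal_sup_ubound; exists x0.
  by apply: le_trans hx; rewrite lee_fin.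
move=> _ [f Ff <-].
have [if1 if2 if3] := hint f (or_introl Ff).
have b1 := supp_bound smu ih1 if1.
have b2 := supp_bound smut ih2 if2.
have b3 := supp_bound sgam ih3 if3.
have bA : (fine (expect mu f) - fine (expect mut f))%R%:E <= ipm F mu mut.
  by apply: ereal_sup_ubound; exists f => //; rewrite diff_fin.
have bB : (fine (expect mu h) - fine (expect mut h))%R%:E <= ipm H mu mut.
  by apply: ereal_sup_ubound; exists h => //; rewrite diff_fin.
have bD : (fine (expect mut f) - fine (expect gam f))%R%:E <= ipm F mut gam.
  by apply: ereal_sup_ubound; exists f => //; rewrite diff_fin.
move: b1 b2 b3 bA bB bD.
set mh := fine (expect mu h); set mf := fine (expect mu f).
set th := fine (expect mut h); set tf := fine (expect mut f).
set gh := fine (expect gam h); set gf := fine (expect gam f).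
move=> b1 b2 b3 bA bB bD.
have [AB|BA] := leP (ipm F mu mut) (ipm H mu mut).
- rewrite (_ : (mh - gh)%R = ((mh - mf) + (gf - gh)) + ((mf - tf) + (tf - gf)))%R; last by ring.
  rewrite !EFinD; apply: leeD; apply: leeD => //.
  + by apply: le_trans b1; rewrite lee_fin; exact: ler_norm.
  + by apply: le_trans b3; rewrite lee_fin distrC; exact: ler_norm.
- rewrite (_ : (mh - gh)%R = ((th - tf) + (gf - gh)) + ((mh - th) + (tf - gf)))%R; last by ring.
  rewrite !EFinD; apply: leeD; apply: leeD => //.
  + by apply: le_trans b2; rewrite lee_fin; exact: ler_norm.
  + by apply: le_trans b3; rewrite lee_fin distrC; exact: ler_norm.
by case: Fn => f Ff; exists (sup_dist Om h f), f.
Qed.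

Lemma addey_ge0 (x : \bar R) : 0 <= x -> x + +oo = +oo.
Proof. by case: x. Qed.

End helpers.

Theorem lemma24 (R : realType) (k d m : nat)
  (nu : probability (Rvec R k) R)
  (G : set (Rvec R k -> Rvec R d))
  (F : set (Rvec R d -> R))
  (Om : set (Rvec R d))
  (mu : probability (Rvec R d) R)
  (mut : probability (Rvec R d) R)
  (Z : 'I_m -> Rvec R k)
  (eps : R)
  (gn gnm : Rvec R k -> Rvec R d)
  (H : set (Rvec R d -> R)) :
  (forall g, G g -> measurable_fun setT g) ->
  F !=set0 ->
  symmetric_class F ->
  supported_on mu Om ->
  (forall g, G g -> supported_on (pushforward nu g) Om) ->
  supported_on mut Om ->
  (0 < m)%N ->
  (0 <= eps)%R ->
  (* expectations of the functions of F and H are well defined (finite) *)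
  (forall f, F f \/ H f ->
     [/\ mu.-integrable setT (EFin \o f),
         mut.-integrable setT (EFin \o f) &
         forall g, G g -> (pushforward nu g).-integrable setT (EFin \o f)]) ->
  G gn ->
  ipm F mut (pushforward nu gn)
    <= ereal_inf [set ipm F mut (pushforward nu phi) | phi in G] + eps%:E ->
  G gnm ->
  ipm F mut (pushforward (empirical Z) gnm)
    <= ereal_inf [set ipm F mut (pushforward (empirical Z) phi) | phi in G]
       + eps%:E ->
  ipm H mu (pushforward nu gn)
    <= eps%:E + 2%:E * approx_err H F Om
       + ereal_inf [set ipm F mut (pushforward nu g) | g in G]
       + mine (ipm F mu mut) (ipm H mu mut)
  /\
  ipm H mu (pushforward nu gnm)
    <= eps%:E + 2%:E * approx_err H F Om
       + ereal_inf [set ipm F mut (pushforward nu g) | g in G]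
       + mine (ipm F mu mut) (ipm H mu mut)
       + 2%:E * ipm (comp_class F G) nu (empirical Z).
Proof.
move=> mG Fn sF smu sG smut m0 eps0 hint Ggn hn Ggnm hnm.
have coreG : forall g, G g -> ipm H mu (pushforward nu g) <=
    approx_err H F Om + approx_err H F Om +
    (mine (ipm F mu mut) (ipm H mu mut) + ipm F mut (pushforward nu g)).
  move=> g Gg; have [P PE] := pf_prob nu g (mG g Gg); rewrite PE.
  apply: core => //; first by rewrite -PE; exact: sG.
  move=> f Hf; have [a b c] := hint f Hf; split => //; by move: (c g Gg); rewrite PE.
have DG0 : forall g, G g -> 0 <= ipm F mut (pushforward nu g).
  move=> g Gg; have [P PE] := pf_prob nu g (mG g Gg); rewrite PE.
  apply: ipm_ge0 => // f Ff; have [a b c] := hint f (or_introl Ff); split => //.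
  by move: (c g Gg); rewrite PE.
have I0 : 0 <= ereal_inf [set ipm F mut (pushforward nu g) | g in G].
  by apply/ereal_infP => _ [g Gg <-]; exact: DG0.
set E := approx_err H F Om.
set M := mine (ipm F mu mut) (ipm H mu mut).
set I := ereal_inf [set ipm F mut (pushforward nu g) | g in G].
split.
  apply: le_trans (coreG gn Ggn) _.
  rewrite [leRHS](_ : _ = E + E + (M + (I + eps%:E))); last first.
    by rewrite mule2 !addrA (ACl (2*3*5*4*1))%AC.
  by apply: leeD2l; apply: leeD2l; exact: hn.
case: m Z m0 hnm => [//|m'] Z _ hnm.
set C := ipm (comp_class F G) nu (empirical Z).
have elt : forall g f, G g -> F f -> exists x y tf : R,
  [/\ expect mut f - expect (pushforward nu g) f = (tf - x)%R%:E,
      expect mut f - expect (pushforward (empirical Z) g) f = (tf - y)%R%:E,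
      (x - y)%R%:E <= C & (y - x)%R%:E <= C].
  move=> g f Gg Ff.
  have [i1 i2 i3] := hint f (or_introl Ff).
  have mg := mG g Gg.
  have mf : measurable_fun setT f.
    by apply/measurable_EFinP; exact: (measurable_int _ i1).
  have [inu epf] := expect_pf nu g f mg (i3 g Gg).
  have mfg : measurable_fun setT (f \o g) by exact: measurableT_comp.
  have mnfg : measurable_fun setT ((fun x => - f x)%R \o g).
    by apply: measurableT_comp => //; apply: measurableT_comp.
  exists (fine (expect nu (f \o g))),
    ((m'.+1%:R)^-1 * \sum_(j < m'.+1) f (g (Z j)))%R, (fine (expect mut f)).
  split.
  - by rewrite epf {1}(expect_fin i2) {1}(expect_fin inu) -EFinB.
  - by rewrite pf_emp expect_emp // {1}(expect_fin i2) -EFinB.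
  - apply: ereal_sup_ubound; exists (f \o g); first by exists f, g.
    by rewrite expect_emp // {1}(expect_fin inu) -EFinB.
  - apply: ereal_sup_ubound; exists ((fun x => - f x)%R \o g).
      by exists (fun x => - f x)%R, g; split => //; exact: sF.
    rewrite expect_emp //.
    rewrite (_ : expect nu ((fun x => - f x)%R \o g) = - expect nu (f \o g)); last first.
      by move: (@expectN _ _ _ _ (f \o g) inu); rewrite /comp.
    rewrite {1}(expect_fin inu) -EFinN -EFinB; congr EFin.
    rewrite (eq_bigr (fun j : 'I_m'.+1 => - f (g (Z j)))%R) // sumrN; ring.
have shift : forall g, G g ->
    ipm F mut (pushforward nu g) <= ipm F mut (pushforward (empirical Z) g) + C /\
    ipm F mut (pushforward (empirical Z) g) <= ipm F mut (pushforward nu g) + C.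
  move=> g Gg; split; apply/ereal_supP => _ [f Ff <-];
    have [x [y [tf [e1 e2 c1 c2]]]] := elt g f Gg Ff.
  - rewrite e1 (_ : (tf - x)%R = (tf - y) + (y - x))%R; last by ring.
    rewrite EFinD; apply: leeD => //.
    by apply: ereal_sup_ubound; exists f.
  - rewrite e2 (_ : (tf - y)%R = (tf - x) + (x - y))%R; last by ring.
    rewrite EFinD; apply: leeD => //.
    by apply: ereal_sup_ubound; exists f.
set Ih := ereal_inf [set ipm F mut (pushforward (empirical Z) phi) | phi in G].
have infh : Ih <= I + C.
  case Ce : C => [c| |].
  - rewrite -leeBlDr //; apply/ereal_infP => _ [g Gg <-]; rewrite leeBlDr //.
    have hg : Ih <= ipm F mut (pushforward (empirical Z) g).
      by apply: ereal_inf_lbound; exists g.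
    by apply: le_trans hg _; rewrite -Ce; exact: (shift g Gg).2.
  - by rewrite addey_ge0 ?leey.
  - rewrite addeNy.
    have hg : Ih <= ipm F mut (pushforward (empirical Z) gn).
      by apply: ereal_inf_lbound; exists gn.
    by apply: le_trans hg _; have := (shift gn Ggn).2; rewrite Ce addeNy.
apply: le_trans (coreG gnm Ggnm) _.
have Dle : ipm F mut (pushforward nu gnm) <= (I + C) + (eps%:E + C).
  apply: le_trans (shift gnm Ggnm).1 _.
  apply: le_trans (leeD2r C hnm) _.
  by rewrite -addrA; apply: leeD2r; exact: infh.
rewrite [leRHS](_ : _ = E + E + (M + ((I + C) + (eps%:E + C)))); last first.
  by rewrite !mule2 !addrA (ACl (2*3*5*4*6*1*7))%AC.
by apply: leeD2l; apply: leeD2l.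
Qed.
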